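(* Let $S:\mathbb{R}^m\times\mathbb{R}^n\to\mathbb{R}^q$ be bilinear with lifted operator $\mathscr{S}$, let $\mathcal{K}'\subseteq\mathbb{R}^{m\times n}$ and $\mathcal{M}=\mathcal{K}'-\mathcal{K}'$. Let $X\in\mathcal{N}(\mathscr{S},2)\cap\mathcal{M}\setminus\{0\}$ be a given $m\times n$ real matrix and $\delta\in(0,1)$. Let $\mathbf{M}=xy^T=\sigma uv^T$ be a random rank one matrix, where $x\in\mathbb{R}^m$, $y\in\mathbb{R}^n$ are random vectors satisfying: (A1) $x$ and $y$ each have zero mean and identity covariance; (A2) $x$ and $y$ are mutually independent; (A3) $\|x\|_2$ and $x/\|x\|_2$ are independent, and $\|y\|_2$ and $y/\|y\|_2$ are independent; here $u=x/\|x\|_2$, $v=y/\|y\|_2$. Then $\Pr(\|P_{\mathcal{C}(X)}u\|_2^2\ge1-\delta)\le\frac{2}{m(1-\delta)}$ and $\Pr(\|P_{\mathcal{R}(X)}v\|_2^2\ge1-\delta)\le\frac{2}{n(1-\delta)}$.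
   Context: For $j=1,\dots,q$ let $S_j$ be the unique matrix with $(S(x,y))_j=x^TS_jy$; the lifted operator is $(\mathscr{S}(W))_j=\operatorname{tr}(S_j^TW)$. $\mathcal{N}(\mathscr{S},k)=\{X:\operatorname{rank}(X)\le k,\ \mathscr{S}(X)=0\}$; $\mathcal{K}'-\mathcal{K}'=\{X_1-X_2:X_1,X_2\in\mathcal{K}'\}$. $\mathcal{C}(X)$, $\mathcal{R}(X)$ are the column and row spaces of $X$, and $P_{\mathcal{V}}$ is the orthogonal projection matrix onto a subspace $\mathcal{V}$. *)

(* Defs.v *)
From HB Require Import structures.
From mathcomp Require Import all_boot all_order all_algebra.
From mathcomp Require Import all_classical all_reals all_analysis.
Set Implicit Arguments. Unset Strict Implicit. Unset Printing Implicit Defensive.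
Import Order.TTheory GRing.Theory Num.Theory.
Local Open Scope classical_set_scope.
Local Open Scope ring_scope.

Definition bilinear_map (R : pzRingType) (m n q : nat)
  (S : 'cV[R]_m -> 'cV[R]_n -> 'cV[R]_q) : Prop :=
  (forall y a x1 x2, S (a *: x1 + x2) y = a *: S x1 y + S x2 y) /\
  (forall x a y1 y2, S x (a *: y1 + y2) = a *: S x y1 + S x y2).

(* S_j : the unique matrix with (S(x,y))_j = x^T S_j y (for bilinear S),
   i.e. (S_j)_{ab} = (S(e_a, e_b))_j. *)
Definition Smat (R : pzRingType) (m n q : nat)
  (S : 'cV[R]_m -> 'cV[R]_n -> 'cV[R]_q) (j : 'I_q) : 'M[R]_(m, n) :=
  \matrix_(a, b) S (delta_mx a 0) (delta_mx b 0) j 0.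

Definition lifted (R : pzRingType) (m n q : nat)
  (S : 'cV[R]_m -> 'cV[R]_n -> 'cV[R]_q) (W : 'M[R]_(m, n)) : 'cV[R]_q :=
  \col_j \tr ((Smat S j)^T *m W).

Definition Nset (R : fieldType) (m n q : nat)
  (S : 'cV[R]_m -> 'cV[R]_n -> 'cV[R]_q) (k : nat) : set 'M[R]_(m, n) :=
  [set X | (\rank X <= k)%N /\ lifted S X = 0].

Definition diffset (R : pzRingType) (m n : nat) (K : set 'M[R]_(m, n))
  : set 'M[R]_(m, n) :=
  [set Z | exists X1 X2, K X1 /\ K X2 /\ Z = X1 - X2].

(* Column space C(X) and row space R(X), as subspaces (%MS row-space
   representation): C(X) is the row space of X^T, R(X) that of X. *)
Definition is_orth_proj (R : fieldType) (k d : nat)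
  (P : 'M[R]_d) (V : 'M[R]_(k, d)) : Prop :=
  P^T = P /\ P *m P = P /\ (P == V)%MS.

Definition sqnorm (R : pzRingType) (d : nat) (v : 'cV[R]_d) : R :=
  \sum_i (v i 0) ^+ 2.

Definition norm2 (R : rcfType) (d : nat) (v : 'cV[R]_d) : R :=
  Num.sqrt (sqnorm v).

(* Random vector from its coordinates; normalized vector (0/0 = 0). *)
Definition rvec (T R : Type) (d : nat) (x : 'I_d -> T -> R) (t : T) : 'cV[R]_d :=
  \col_i x i t.
Definition rdir (T : Type) (R : rcfType) (d : nat) (x : 'I_d -> T -> R) (t : T)
  : 'cV[R]_d := (norm2 (rvec x t))^-1 *: rvec x t.

Definition box (T R : Type) (d : nat) (x : 'I_d -> T -> R) (A : 'I_d -> set R)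
  : set T := [set t | forall i, A i (x i t)].

(* Mutual independence of the random vectors x and y (on the generating
   pi-system of measurable rectangles of the product Borel sigma-algebras). *)
Definition indep_vec {dT} {T : measurableType dT} {R : realType}
  (P : probability T R) (m n : nat) (x : 'I_m -> T -> R) (y : 'I_n -> T -> R)
  : Prop :=
  forall (A : 'I_m -> set R) (B : 'I_n -> set R),
    (forall i, measurable (A i)) -> (forall j, measurable (B j)) ->
    P (box x A `&` box y B) = (P (box x A) * P (box y B))%E.

Definition mean0_idcov {dT} {T : measurableType dT} {R : realType}
  (P : probability T R) (m : nat) (x : 'I_m -> {RV P >-> R}) : Prop :=
  (forall i, (x i : T -> R) \in Lfun P 2%:E) /\
  (forall i, ('E_P[x i] = 0)%E) /\
  (forall i j, covariance P (x i) (x j) = ((i == j)%:R)%:E).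

Definition norm_dir_indep {dT} {T : measurableType dT} {R : realType}
  (P : probability T R) (m : nat) (x : 'I_m -> T -> R) : Prop :=
  indep_vec P (fun (_ : 'I_1) t => norm2 (rvec x t))
              (fun i t => rdir x t i 0).

(* Main.v *)
Require Import Defs.
From HB Require Import structures.
From mathcomp Require Import all_boot all_order all_algebra.
From mathcomp Require Import all_classical all_reals all_analysis.
From mathcomp Require Import measurable_realfun.
Import Order.TTheory GRing.Theory Num.Theory.
Local Open Scope classical_set_scope.
Local Open Scope ring_scope.


Section integral_mrestr.
Local Open Scope ereal_scope.
Context d (T : measurableType d) (R : realType).
Variables (m : {measure set T -> \bar R}) (D E : set T).
Hypotheses (mD : measurable D) (mE : measurable E).

Let mDE : measurable (D `&` E). Proof. exact: measurableI. Qed.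

Let integral_mrestr_indic A : measurable A ->
  \int[mrestr m mE]_(x in D) (\1_A x)%:E = \int[m]_(x in D `&` E) (\1_A x)%:E.
Proof. by move=> mA; rewrite !integral_indic// /mrestr setIA. Qed.

Import HBNNSimple.

Let integral_mrestr_nnsfun (h : {nnsfun T >-> R}) :
  \int[mrestr m mE]_(x in D) (h x)%:E = \int[m]_(x in D `&` E) (h x)%:E.
Proof.
under [LHS]eq_integral do rewrite fimfunE -fsumEFin//.
under [RHS]eq_integral do rewrite fimfunE -fsumEFin//.
rewrite [LHS]ge0_integral_fsum//; last 2 first.
  - by move=> r; exact/measurable_EFinP/measurableT_comp.
  - by move=> n x _; rewrite EFinM nnfun_muleindic_ge0.
rewrite [RHS]ge0_integral_fsum//; last 2 first.
  - by move=> r; exact/measurable_EFinP/measurableT_comp.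
  - by move=> n x _; rewrite EFinM nnfun_muleindic_ge0.
apply: eq_fsbigr => r _.
by rewrite !integralZl_indic_nnsfun//= integral_mrestr_indic.
Qed.

Lemma ge0_integral_mrestr (f : T -> \bar R) (mf : measurable_fun D f) :
    (forall x, D x -> 0 <= f x) ->
  \int[mrestr m mE]_(x in D) f x = \int[m]_(x in D `&` E) f x.
Proof.
move=> f0; pose f_ := nnsfun_approx mD mf.
transitivity (limn (fun n => \int[mrestr m mE]_(x in D) (f_ n x)%:E)).
  rewrite -monotone_convergence//=.
  - apply: eq_integral => x /[!inE] xD; apply/esym/cvg_lim => //=.
    exact: cvg_nnsfun_approx.
  - by move=> n; apply: measurableT_comp => //; exact: measurable_funTS.
  - by move=> n x _; rewrite lee_fin.
  - by move=> x _ a b ab; rewrite lee_fin//; exact/lefP/nd_nnsfun_approx.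
rewrite (_ : \int[m]_(x in D `&` E) _ =
    limn (fun n => \int[m]_(x in D `&` E) (f_ n x)%:E)); last first.
  rewrite -monotone_convergence//=.
  - apply: eq_integral => x; rewrite inE => -[xD _]; apply/esym/cvg_lim => //.
    exact: cvg_nnsfun_approx.
  - by move=> n; exact/measurable_EFinP/measurable_funTS.
  - by move=> n x _; rewrite lee_fin.
  - by move=> x _ a b ab; rewrite lee_fin//; exact/lefP/nd_nnsfun_approx.
by congr (limn _); apply/funext => n /=; rewrite integral_mrestr_nnsfun.
Qed.

End integral_mrestr.

Section expect.
Context d (T : measurableType d) (R : realType) (P : probability T R).

Lemma expectation_bigsum_aux (I : Type) (r : seq I) (F : I -> T -> R) :
  (forall i, F i \in Lfun P 1) ->
  (fun t => \sum_(i <- r) F i t) \in Lfun P 1 /\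
  ('E_P[fun t => (\sum_(i <- r) F i t)%R] = \sum_(i <- r) 'E_P[F i])%E.
Proof.
move=> hF; elim: r => [|a r [IH1 IH2]].
  have -> : (fun t => \sum_(i <- [::]) F i t) = cst 0.
    by apply/funext => t; rewrite big_nil.
  by rewrite big_nil expectation_cst; split => //; exact: Lfun_cst.
have -> : (fun t => \sum_(i <- a :: r) F i t) =
          (F a \+ (fun t => \sum_(i <- r) F i t))%R.
  by apply/funext => t; rewrite big_cons.
split; first exact: rpredD.
by rewrite expectationD// IH2 big_cons.
Qed.

Lemma Lfun_bigsum (I : Type) (r : seq I) (F : I -> T -> R) :
  (forall i, F i \in Lfun P 1) -> (fun t => \sum_(i <- r) F i t) \in Lfun P 1.
Proof. by move=> h; case: (@expectation_bigsum_aux I r F h). Qed.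

Lemma expectation_bigsum (I : Type) (r : seq I) (F : I -> T -> R) :
  (forall i, F i \in Lfun P 1) ->
  ('E_P[fun t => (\sum_(i <- r) F i t)%R] = \sum_(i <- r) 'E_P[F i])%E.
Proof. by move=> h; case: (@expectation_bigsum_aux I r F h). Qed.

Variables (m : nat) (x : 'I_m -> {RV P >-> R}).
Hypothesis hx : mean0_idcov x.

Lemma x_L1 i : (x i : T -> R) \in Lfun P 1.
Proof. by case: hx => h _; apply: (Lfun_subset12 _ (h i)); exact: fin_num_measure. Qed.

Lemma xx_L1 i j : ((x i : T -> R) \* (x j : T -> R))%R \in Lfun P 1.
Proof. by case: hx => h _; apply: Lfun2_mul_Lfun1. Qed.

Lemma E_xx i j : ('E_P[((x i : T -> R) \* (x j : T -> R))%R] = ((i == j)%:R)%:E)%E.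
Proof.
case: hx => _ [h0 hc]; have := hc i j.
rewrite covarianceE ?x_L1 ?xx_L1// h0 h0 mule0 sube0 => <-.
done.
Qed.

Lemma E_sqnorm k (Q : 'M[R]_(k, m)) :
  ('E_P[fun t => sqnorm (Q *m rvec (fun i => (x i : T -> R)) t)%R] =
  (\tr (Q^T *m Q))%:E)%E.
Proof.
have -> : (fun t => sqnorm (Q *m rvec (fun i => (x i : T -> R)) t)) =
  (fun t => \sum_(a < k) \sum_(l < m) \sum_(l' < m)
      ((Q a l * Q a l') \o* ((x l : T -> R) \* (x l' : T -> R)))%R t).
  apply/funext => t; rewrite /sqnorm; apply: eq_bigr => a _.
  rewrite /rvec mxE expr2 big_distrl /=; apply: eq_bigr => l _.
  rewrite big_distrr /=; apply: eq_bigr => l' _.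
  rewrite !mxE /=.
  by rewrite mulrACA mulrC.
rewrite expectation_bigsum; last first.
  move=> a; apply: Lfun_bigsum => l; apply: Lfun_bigsum => l'.
  by apply: Lfun_scale => //; exact: xx_L1.
under eq_bigr => a _.
  rewrite expectation_bigsum; last first.
    by move=> l; apply: Lfun_bigsum => l'; apply: Lfun_scale => //; exact: xx_L1.
  under eq_bigr => l _.
    rewrite expectation_bigsum; last by move=> l'; apply: Lfun_scale => //; exact: xx_L1.
    under eq_bigr => l' _ do rewrite expectationZl ?xx_L1// E_xx.
    over.
  over.
rewrite /=.
transitivity ((\sum_a \sum_l \sum_l' (Q a l * Q a l' * (l == l')%:R))%:E).
  rewrite -sumEFin; apply: eq_bigr => a _; rewrite -sumEFin.
  apply: eq_bigr => l _; rewrite -sumEFin; apply: eq_bigr => l' _.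
  by rewrite EFinM.
congr (_%:E); rewrite /mxtrace exchange_big /=; apply: eq_bigr => l _.
rewrite mxE; apply: eq_bigr => a _.
rewrite (bigD1 l)//= eqxx mulr1 big1 ?addr0 ?mxE//.
by move=> l' /negbTE; rewrite eq_sym => ->; rewrite mulr0.
Qed.

End expect.

Lemma trace_idem (F : fieldType) (n : nat) (Q : 'M[F]_n) :
  Q *m Q = Q -> \tr Q = (\rank Q)%:R.
Proof.
move=> QQ.
have := mulmx_base Q; have := col_base_full Q; have := row_base_free Q.
move: (col_base Q) (row_base Q) => C B fB fC hQ.
have h1 : B *m C *m B = B.
  apply: (row_full_inj fC).
  by rewrite !mulmxA hQ -mulmxA hQ QQ.
have h2 : B *m C = 1%:M.
  apply: (row_free_inj fB); rewrite /=.
  by rewrite h1 mul1mx.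
have -> : \tr Q = \tr (C *m B) by rewrite hQ.
by rewrite mxtrace_mulC h2 mxtrace1.
Qed.

Lemma trace_orth_proj {R : realType} {k d : nat} {Q : 'M[R]_d} {V : 'M[R]_(k, d)} :
  is_orth_proj Q V -> (\rank V <= 2)%N -> \tr (Q^T *m Q) <= 2.
Proof.
move=> [hT [hI hE]] hr.
by rewrite hT hI trace_idem// (eqmx_rank hE) ler_nat.
Qed.

Section meas.
Context {R : realType}.

Lemma meas_bigsum d0 (T0 : measurableType d0) (I : Type) (r : seq I)
  (F : I -> T0 -> R) : (forall i, measurable_fun setT (F i)) ->
  measurable_fun setT (fun t => \sum_(i <- r) F i t).
Proof.
move=> hF; elim: r => [|a r IH].
  have -> : (fun t => \sum_(i <- [::]) F i t) = cst 0.
    by apply/funext => t; rewrite big_nil.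
  exact: measurable_cst.
have -> : (fun t => \sum_(i <- a :: r) F i t) =
          (F a \+ (fun t => \sum_(i <- r) F i t))%R.
  by apply/funext => t; rewrite big_cons.
exact: measurable_funD.
Qed.

Lemma sqnorm_mulE m k (Q : 'M[R]_(k, m)) (v : 'cV[R]_m) :
  sqnorm (Q *m v) = \sum_a (\sum_l Q a l * v l 0) ^+ 2.
Proof. by apply: eq_bigr => a _; rewrite mxE. Qed.

Lemma meas_sqnorm d0 (T0 : measurableType d0) m k (Q : 'M[R]_(k, m))
  (f : 'I_m -> T0 -> R) : (forall i, measurable_fun setT (f i)) ->
  measurable_fun setT (fun t => sqnorm (Q *m rvec f t)).
Proof.
move=> hf.
have -> : (fun t => sqnorm (Q *m rvec f t)) =
   (fun t => \sum_a (\sum_l Q a l * f l t) ^+ 2).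
  apply/funext => t; rewrite sqnorm_mulE; apply: eq_bigr => a _.
  by congr (_ ^+ 2); apply: eq_bigr => l _; rewrite /rvec mxE.
apply: meas_bigsum => a; apply: measurable_funX.
apply: meas_bigsum => l; apply: measurable_funM => //.
Qed.

End meas.

Lemma box_bigcap (T0 R0 : Type) (m : nat) (f : 'I_m -> T0 -> R0) (B : 'I_m -> set R0) :
  box f B = \bigcap_(i in [set: 'I_m]) (f i @^-1` B i).
Proof.
by apply/seteqP; split => t /= h i; [move=> _|]; apply: h.
Qed.

Lemma box_measurable d0 (T0 : measurableType d0) (R0 : realType) (m : nat)
  (f : 'I_m -> T0 -> R0) (B : 'I_m -> set R0) :
  (forall i, measurable_fun setT (f i)) -> (forall i, measurable (B i)) ->
  measurable (box f B).
Proof.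
move=> mf mB; rewrite box_bigcap; apply: fin_bigcap_measurable.
  exact: finite_finset.
by move=> i _; rewrite -[X in measurable X]setTI; apply: mf.
Qed.

Lemma sqnorm_ge0 (R0 : realType) n (v : 'cV[R0]_n) : 0 <= sqnorm v.
Proof. by apply: sumr_ge0 => i _; exact: sqr_ge0. Qed.

Lemma sqnorm_scale (R0 : realType) n (a : R0) (w : 'cV[R0]_n) :
  sqnorm (a *: w) = a ^+ 2 * sqnorm w.
Proof. by rewrite /sqnorm mulr_sumr; apply: eq_bigr => i _; rewrite mxE exprMn. Qed.

Lemma sqnorm_eq0 (R0 : realType) n (v : 'cV[R0]_n) : sqnorm v = 0 -> v = 0.
Proof.
move/eqP; rewrite psumr_eq0 => [/allP hv|i _]; last exact: sqr_ge0.
apply/matrixP => i j; rewrite (ord1 j) mxE.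
by apply/eqP; rewrite -sqrf_eq0; apply: (implyP (hv i (mem_index_enum i))).
Qed.

Lemma sqnorm_dir (R0 : realType) n k (Q : 'M[R0]_(k, n)) (v : 'cV[R0]_n) :
  sqnorm (Q *m v) = sqnorm v * sqnorm (Q *m ((norm2 v)^-1 *: v)).
Proof.
rewrite -scalemxAr sqnorm_scale.
have [h|h] := eqVneq (sqnorm v) 0.
  rewrite h mul0r (@sqnorm_eq0 _ _ v h) mulmx0.
  by rewrite /sqnorm big1 // => i _; rewrite mxE expr0n.
rewrite /norm2 exprVn sqr_sqrtr ?sqnorm_ge0// mulrA mulfV// mul1r.
reflexivity.
Qed.

Section main.
Context d (T : measurableType d) (R : realType) (P : probability T R).
Variables (m : nat) (x : 'I_m -> {RV P >-> R}).
Let xf := fun i => (x i : T -> R).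
Let S t := sqnorm (rvec xf t).
Let N t := norm2 (rvec xf t).
Let U i t := rdir xf t i 0.

Let mxf i : measurable_fun setT (xf i).
Proof. exact: measurable_funPT. Qed.

Let mS : measurable_fun setT S.
Proof.
have -> : S = fun t => sqnorm (1%:M *m rvec xf t).
  by apply/funext => t; rewrite mul1mx.
exact: meas_sqnorm.
Qed.

Let mN : measurable_fun setT N.
Proof.
have -> : N = fun t => S t `^ 2^-1.
  by apply/funext => t; rewrite powR12_sqrt// sqnorm_ge0.
exact: measurableT_comp (measurable_powR _) mS.
Qed.

Let UE i t : U i t = (N t)^-1 * xf i t.
Proof. by rewrite /U /rdir /rvec !mxE. Qed.

Let mU i : measurable_fun setT (U i).
Proof.
have -> : U i = fun t => (N t) `^ (-1) * xf i t.
  by apply/funext => t; rewrite UE powR_inv1// sqrtr_ge0.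
apply: measurable_funM => //.
exact: measurableT_comp (measurable_powR _) mN.
Qed.

Definition Gu := [set A | exists2 B : 'I_m -> set R,
  (forall i, measurable (B i)) & A = box U B].

Let Gm : Gu `<=` measurable.
Proof. by move=> _ [B mB ->]; exact: box_measurable. Qed.

Let GT : Gu setT.
Proof.
exists (fun _ => setT) => //; apply/seteqP; split => t //= _ i.
Qed.

Let GI : setI_closed Gu.
Proof.
move=> _ _ [B mB ->] [C mC ->]; exists (fun i => B i `&` C i).
  by move=> i; exact: measurableI.
apply/seteqP; split => t /=.
  by move=> [h1 h2] i; split; [exact: h1|exact: h2].
by move=> h; split => i; have [] := h i.
Qed.

Hypothesis hxu : norm_dir_indep P xf.

Let mpre A : measurable A -> measurable (N @^-1` A).
Proof. by move=> mA; rewrite -[X in measurable X]setTI; apply: mN. Qed.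

Let boxN A : box (fun (_ : 'I_1) t => N t) (fun _ => A) = N @^-1` A.
Proof. by apply/seteqP; split => t /=; [move=> h; exact: (h ord0)|move=> h i]. Qed.

Lemma indepE A (mA : measurable A) E (hE : <<s Gu >> E) :
  P (N @^-1` A `&` E) = (P (N @^-1` A) * P E)%E.
Proof.
have mNA := mpre A mA.
pose c := NngNum (fine_ge0 (measure_ge0 P (N @^-1` A))).
have h : mrestr P mNA E = mscale c P E.
  apply: (@g_sigma_algebra_measure_unique _ _ _ Gu Gm (fun _ => setT) (fun _ => GT)) => //.
  - by apply/seteqP; split => // t _; exists 0%N.
  - move=> _ [B mB ->].
    change (P (box U B `&` N @^-1` A) = (fine (P (N @^-1` A)))%:E * P (box U B))%E.
    rewrite fineK ?fin_num_measure//.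
    have := hxu (fun _ => A) B (fun _ => mA) mB.
    by rewrite boxN => h; rewrite setIC h muleC.
  - move=> k; change (P (setT `&` N @^-1` A) < +oo)%E.
    by rewrite setTI; apply: (le_lt_trans (probability_le1 _ mNA)); exact: ltry.
move: h.
change (P (E `&` N @^-1` A) = (fine (P (N @^-1` A)))%:E * P E -> 
  P (N @^-1` A `&` E) = (P (N @^-1` A) * P E))%E.
by rewrite fineK ?fin_num_measure// setIC => ->.
Qed.

Let SN t : S t = N t ^+ 2.
Proof. by rewrite /N /norm2 sqr_sqrtr// sqnorm_ge0. Qed.

Lemma integral_indep E (mE : measurable E) (hE : <<s Gu >> E) :
  (\int[P]_(t in E) (S t)%:E = P E * \int[P]_t (S t)%:E)%E.
Proof.
pose f := fun y : R => ((y ^+ 2)%:E : \bar R).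
have mf : measurable_fun setT f.
  by apply/measurable_EFinP; exact: exprn_measurable.
have f0 : {in setT, forall y, (0 <= f y)%E}.
  by move=> y _; rewrite /f lee_fin sqr_ge0.
have mSE : measurable_fun setT (fun t => (S t)%:E).
  by apply/measurable_EFinP; exact: mS.
have S0 : forall t, setT t -> (0 <= (S t)%:E)%E.
  by move=> t _; rewrite lee_fin sqnorm_ge0.
pose c := NngNum (fine_ge0 (measure_ge0 P E)).
transitivity (\int[mrestr P mE]_(t in setT) (S t)%:E)%E.
  by rewrite ge0_integral_mrestr// setTI.
transitivity (\int[pushforward (mrestr P mE) N]_(y in setT) f y)%E.
  rewrite (ge0_integral_pushforward mN)// preimage_setT.
  by apply: eq_integral => t _; rewrite /f /= SN.
transitivity (\int[pushforward (mscale c P) N]_(y in setT) f y)%E.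
  apply: eq_measure_integral => A mA _.
  change (P (N @^-1` A `&` E) = (fine (P E))%:E * P (N @^-1` A))%E.
  by rewrite fineK ?fin_num_measure// indepE// muleC.
rewrite (ge0_integral_pushforward mN)// preimage_setT.
rewrite (_ : (\int[mscale c P]_(x in setT) (f \o N) x =
   \int[mscale c P]_(x in setT) (S x)%:E)%E); last first.
  by apply: eq_integral => t _; rewrite /f /= SN.
by rewrite ge0_integral_mscale//= fineK ?fin_num_measure.
Qed.

Let rdirU t : rdir xf t = rvec U t.
Proof. by apply/matrixP => i j; rewrite /rvec mxE (ord1 j). Qed.

Lemma EsG k (Q : 'M[R]_(k, m)) c :
  <<s Gu >> [set t | c <= sqnorm (Q *m rdir xf t)].
Proof.
pose T' := g_sigma_algebraType Gu.
have mU' : forall i, measurable_fun (setT : set T') (U i : T' -> R).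
  move=> i _ B mB; apply: sub_sigma_algebra.
  exists (fun j => if j == i then B else setT).
    by move=> j; case: ifP.
  apply/seteqP; split => t /=.
    by move=> [_ h] j; case: ifP => // /eqP ->.
  by move=> h; split => //; have := h i; rewrite eqxx.
have mg := @meas_sqnorm R _ T' m k Q U mU'.
have := measurable_fun_ler (measurable_cst c) mg measurableT (Y := [set true]) I.
have -> : (setT `&` (fun x : T' => c <= sqnorm (Q *m rvec U x)) @^-1` [set true])
   = [set t | c <= sqnorm (Q *m rdir xf t)].
  apply/seteqP; split => t /=; rewrite rdirU; first by case.
  by move=> h; split.
by [].
Qed.

Hypothesis hx : mean0_idcov x.

Lemma key k (V : 'M[R]_(k, m)) (Q : 'M[R]_m) (hQ : is_orth_proj Q V)
  (hV : (\rank V <= 2)%N) (c : R) (hc : 0 < c) :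
  (P [set t | (c <= sqnorm (Q *m rdir xf t))%R] <= (2 / (m%:R * c))%:E)%E.
Proof.
set E := [set t | c <= sqnorm (Q *m rdir xf t)].
have sE : <<s Gu >> E := EsG m Q c.
have mE : measurable E := smallest_sub (@sigma_algebra_measurable _ T) Gm sE.
have [m0|mpos] := eqVneq m 0%N.
  have -> : E = set0.
    apply/seteqP; split => t //=; rewrite /E /=.
    move: (Q *m rdir xf t); rewrite m0 => w.
    by rewrite /sqnorm big_ord0 leNgt hc.
  by rewrite measure0 lee_fin; rewrite m0 mul0r invr0 mulr0.
have hQx : (\int[P]_t (sqnorm (Q *m rvec xf t))%:E = (\tr (Q^T *m Q))%:E)%E.
  by have := @E_sqnorm _ _ _ P m x hx _ Q; rewrite unlock.
have hS : (\int[P]_t (S t)%:E = (m%:R)%:E)%E.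
  have := @E_sqnorm _ _ _ P m x hx _ (1%:M : 'M[R]_m); rewrite unlock trmx1 mul1mx mxtrace1 => <-.
  by apply: eq_integral => t _; rewrite mul1mx.
have mQx : measurable_fun setT (fun t => (sqnorm (Q *m rvec xf t))%:E).
  by apply/measurable_EFinP; exact: meas_sqnorm.
have mSE : measurable_fun setT (fun t => (S t)%:E).
  by apply/measurable_EFinP; exact: mS.
have chain : (c%:E * (P E * (m%:R)%:E) <= 2%:E)%E.
  rewrite -hS -integral_indep// -ge0_integralZl_EFin//; last 3 first.
  - by move=> t _; rewrite lee_fin sqnorm_ge0.
  - exact: measurable_funTS.
  - exact: ltW.
  apply: (@le_trans _ _ (\int[P]_(t in E) (sqnorm (Q *m rvec xf t))%:E)%E).
    apply: ge0_le_integral => //.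
    - by move=> t _; rewrite lee_fin mulr_ge0 ?sqnorm_ge0// ltW.
    - by apply/measurable_EFinP/measurable_funM => //; exact: measurable_funTS.
    - exact: measurable_funTS.
    move=> t Et; rewrite lee_fin sqnorm_dir mulrC.
    by apply: ler_wpM2l; [exact: sqnorm_ge0|exact: Et].
  apply: (@le_trans _ _ (\int[P]_(t in setT) (sqnorm (Q *m rvec xf t))%:E)%E).
    apply: ge0_subset_integral => //.
    by move=> t _; rewrite lee_fin sqnorm_ge0.
  by rewrite hQx lee_fin; exact: (trace_orth_proj hQ hV).
move: chain; rewrite -(fineK (fin_num_measure P E mE)) -!EFinM lee_fin => chain.
rewrite lee_fin ler_pdivlMr ?mulr_gt0 ?ltr0n ?lt0n//.
by rewrite (mulrC m%:R c) mulrCA.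

Qed.

End main.

Theorem lemma1 (R : realType) (m n q : nat)
  (S : 'cV[R]_m -> 'cV[R]_n -> 'cV[R]_q) (hS : bilinear_map S)
  (K : set 'M[R]_(m, n)) (X : 'M[R]_(m, n))
  (hX : Nset S 2 X) (hXM : diffset K X) (hX0 : X != 0)
  (delta : R) (hd0 : 0 < delta) (hd1 : delta < 1)
  (dT : measure_display) (T : measurableType dT) (P : probability T R)
  (x : 'I_m -> {RV P >-> R}) (y : 'I_n -> {RV P >-> R})
  (hx : mean0_idcov x) (hy : mean0_idcov y)
  (hxy : indep_vec P (fun i => (x i : T -> R)) (fun j => (y j : T -> R)))
  (hxu : norm_dir_indep P (fun i => (x i : T -> R)))
  (hyv : norm_dir_indep P (fun j => (y j : T -> R)))
  (PC : 'M[R]_m) (hPC : is_orth_proj PC X^T)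
  (PR : 'M[R]_n) (hPR : is_orth_proj PR X) :
  (P [set t | (1 - delta <= sqnorm (PC *m rdir (fun i => (x i : T -> R)) t))%R]
     <= (2 / (m%:R * (1 - delta)))%:E)%E /\
  (P [set t | (1 - delta <= sqnorm (PR *m rdir (fun j => (y j : T -> R)) t))%R]
     <= (2 / (n%:R * (1 - delta)))%:E)%E.
Proof.
have hc : 0 < 1 - delta by rewrite subr_gt0.
case: hX => hrk _.
split.
  apply: (@key _ _ _ P _ x hxu hx _ X^T PC hPC _ (1 - delta) hc).
  by rewrite mxrank_tr.
exact: (@key _ _ _ P _ y hyv hy _ X PR hPR hrk (1 - delta) hc).
Qed.
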